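(* Let $\mathbb{F}$ be an algebraically closed field of characteristic different from $2$. Every 2-local 1-automorphism of $H_3(\mathcal{O}(\mathbb{F}))$ is an automorphism.
   Context: $\mathcal{Q}(\mathbb{F})$ is a quaternion algebra (basis $\mathbf{1},i,j,k$, $i^2=\lambda\mathbf{1}$, $j^2=\mu\mathbf{1}$, $ij=-ji=k$, $\lambda,\mu\ne0$, involution negating $i,j,k$ coordinates). $\mathcal{O}(\mathbb{F})=\mathcal{Q}(\mathbb{F})\oplus\mathcal{Q}(\mathbb{F})$ with product $(a,b)(c,d)=(ac+\nu\bar db,\ da+b\bar c)$ for fixed nonzero $\nu\in\mathbb{F}$ and involution $\overline{(a,b)}=(\bar a,-b)$ (octonions). $H_3(\mathcal{O}(\mathbb{F}))$ is the Jordan algebra of $3\times3$ matrices $x$ over $\mathcal{O}(\mathbb{F})$ with $x_{ij}=\overline{x_{ji}}$, product $x\circ y=\frac12(xy+yx)$. A symmetry is $s$ with $s\circ s=1$, $U_s(x)=2s\circ(s\circ x)-x$. A 2-local 1-automorphism is a map $\Delta$ (not assumed linear) such that for every $x,y$ there is a symmetry $s$ with $\Delta(x)=U_s(x)$, $\Delta(y)=U_s(y)$. *)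

(* Defs.v *)
From mathcomp Require Import all_boot all_order all_algebra.
Set Implicit Arguments. Unset Strict Implicit. Unset Printing Implicit Defensive.
Import GRing.Theory.
Local Open Scope ring_scope.

Section Octonions.
Variable F : fieldType.
(* structure constants: i^2 = lam, j^2 = mu, and nu for the Cayley–Dickson doubling *)
Variables lam mu nu : F.

(* Quaternion algebra Q(F): a0 1 + a1 i + a2 j + a3 k, with k = ij *)
Record quat := Quat { q0 : F; q1 : F; q2 : F; q3 : F }.

Definition qadd (a b : quat) : quat :=
  Quat (q0 a + q0 b) (q1 a + q1 b) (q2 a + q2 b) (q3 a + q3 b).
Definition qopp (a : quat) : quat := Quat (- q0 a) (- q1 a) (- q2 a) (- q3 a).
Definition qscale (c : F) (a : quat) : quat :=
  Quat (c * q0 a) (c * q1 a) (c * q2 a) (c * q3 a).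
Definition qzero : quat := Quat 0 0 0 0.
Definition qone : quat := Quat 1 0 0 0.
Definition qconj (a : quat) : quat := Quat (q0 a) (- q1 a) (- q2 a) (- q3 a).
(* product determined by i^2 = lam, j^2 = mu, ij = -ji = k (bilinearity) *)
Definition qmul (a b : quat) : quat :=
  Quat (q0 a * q0 b + lam * q1 a * q1 b + mu * q2 a * q2 b - lam * mu * q3 a * q3 b)
       (q0 a * q1 b + q1 a * q0 b - mu * q2 a * q3 b + mu * q3 a * q2 b)
       (q0 a * q2 b + q2 a * q0 b + lam * q1 a * q3 b - lam * q3 a * q1 b)
       (q0 a * q3 b + q3 a * q0 b + q1 a * q2 b - q2 a * q1 b).

Record oct := Oct { ofst : quat; osnd : quat }.

Definition oadd (x y : oct) : oct := Oct (qadd (ofst x) (ofst y)) (qadd (osnd x) (osnd y)).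
Definition oopp (x : oct) : oct := Oct (qopp (ofst x)) (qopp (osnd x)).
Definition osub (x y : oct) : oct := oadd x (oopp y).
Definition oscale (c : F) (x : oct) : oct := Oct (qscale c (ofst x)) (qscale c (osnd x)).
Definition ozero : oct := Oct qzero qzero.
Definition oone : oct := Oct qone qzero.
Definition omul (x y : oct) : oct :=
  let a := ofst x in let b := osnd x in let c := ofst y in let d := osnd y in
  Oct (qadd (qmul a c) (qscale nu (qmul (qconj d) b)))
      (qadd (qmul d a) (qmul b (qconj c))).
Definition oconj (x : oct) : oct := Oct (qconj (ofst x)) (qopp (osnd x)).

Definition mat3 := 'M[oct]_3.

Definition i0 : 'I_3 := @inord 2 0.
Definition i1 : 'I_3 := @inord 2 1.
Definition i2 : 'I_3 := @inord 2 2.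

Definition madd (x y : mat3) : mat3 := \matrix_(i, j) oadd (x i j) (y i j).
Definition msub (x y : mat3) : mat3 := \matrix_(i, j) osub (x i j) (y i j).
Definition mscale (c : F) (x : mat3) : mat3 := \matrix_(i, j) oscale c (x i j).
Definition mmul (x y : mat3) : mat3 :=
  \matrix_(i, j) oadd (oadd (omul (x i i0) (y i0 j)) (omul (x i i1) (y i1 j)))
                      (omul (x i i2) (y i2 j)).
Definition mone : mat3 := \matrix_(i, j) if i == j then oone else ozero.

Definition hermitian (x : mat3) : Prop := forall i j, x i j = oconj (x j i).

Definition jmul (x y : mat3) : mat3 := mscale (2%:R)^-1 (madd (mmul x y) (mmul y x)).

Definition symmetry (s : mat3) : Prop := hermitian s /\ jmul s s = mone.

Definition Uop (s x : mat3) : mat3 := msub (mscale 2%:R (jmul s (jmul s x))) x.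

(* 2-local 1-automorphism of H_3(O(F)) (Delta only matters on H_3(O(F))) *)
Definition two_local_1_automorphism (D : mat3 -> mat3) : Prop :=
  forall x y, hermitian x -> hermitian y ->
    exists s, symmetry s /\ D x = Uop s x /\ D y = Uop s y.

Definition jordan_automorphism (D : mat3 -> mat3) : Prop :=
  [/\ forall x, hermitian x -> hermitian (D x),
      forall (c : F) x y, hermitian x -> hermitian y ->
         D (madd (mscale c x) y) = madd (mscale c (D x)) (D y),
      forall x y, hermitian x -> hermitian y -> D (jmul x y) = jmul (D x) (D y),
      forall x y, hermitian x -> hermitian y -> D x = D y -> x = y
    & forall y, hermitian y -> exists2 x, hermitian x & D x = y].

End Octonions.

(* Main.v *)
From Stdlib Require Import Ring_polynom InitialRing Ring_theory ZArith BinList.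
Require Import Defs.
From mathcomp Require Import all_boot all_order all_algebra ring.
Set Implicit Arguments. Unset Strict Implicit. Unset Printing Implicit Defensive.
Import GRing.Theory.
Local Open Scope ring_scope.

(* Proof strategy: polynomial identities of H_3(O) (Jordan-type identities) are checked
   by reflection (Ring_polynom normalisation + vm_compute); an abstract Jordan-algebra
   argument shows U_s is multiplicative and trace-preserving; a Gram-matrix argument on
   the 27 coordinates yields linearity, injectivity and surjectivity. *)

Module S1.
Import GRing.Theory.
Local Open Scope ring_scope.

Record ops T := Ops { oA : T -> T -> T; oM : T -> T -> T; oN : T -> T; oZ : T; oI : T;
  oL : T; oMu : T; oNu : T; oH : T }.
Record GQ T := GQ_ { g0 : T; g1 : T; g2 : T; g3 : T }.
Record GO T := GO_ { gf : GQ T; gs : GQ T }.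
Record GH T := GH_ { hd1 : T; hd2 : T; hd3 : T; ho1 : GO T; ho2 : GO T; ho3 : GO T }.

Section Gen.
Variables (T : Type) (o : ops T).
Local Notation add := (oA o). Local Notation mul := (oM o). Local Notation opp := (oN o).
Local Notation Z := (oZ o).
Local Notation sub a b := (add a (opp b)).
Definition gqadd (a b : GQ T) := GQ_ (add (g0 a) (g0 b)) (add (g1 a) (g1 b)) (add (g2 a) (g2 b)) (add (g3 a) (g3 b)).
Definition gqscale c (a : GQ T) := GQ_ (mul c (g0 a)) (mul c (g1 a)) (mul c (g2 a)) (mul c (g3 a)).
Definition gqopp (a : GQ T) := GQ_ (opp (g0 a)) (opp (g1 a)) (opp (g2 a)) (opp (g3 a)).
Definition gqconj (a : GQ T) := GQ_ (g0 a) (opp (g1 a)) (opp (g2 a)) (opp (g3 a)).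
Definition gqmul (a b : GQ T) :=
  let lam := oL o in let mu := oMu o in
  GQ_ (sub (add (add (mul (g0 a) (g0 b)) (mul (mul lam (g1 a)) (g1 b))) (mul (mul mu (g2 a)) (g2 b)))
             (mul (mul (mul lam mu) (g3 a)) (g3 b)))
      (add (sub (add (mul (g0 a) (g1 b)) (mul (g1 a) (g0 b))) (mul (mul mu (g2 a)) (g3 b))) (mul (mul mu (g3 a)) (g2 b)))
      (sub (add (add (mul (g0 a) (g2 b)) (mul (g2 a) (g0 b))) (mul (mul lam (g1 a)) (g3 b))) (mul (mul lam (g3 a)) (g1 b)))
      (sub (add (add (mul (g0 a) (g3 b)) (mul (g3 a) (g0 b))) (mul (g1 a) (g2 b))) (mul (g2 a) (g1 b))).
Definition goadd (x y : GO T) := GO_ (gqadd (gf x) (gf y)) (gqadd (gs x) (gs y)).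
Definition goopp (x : GO T) := GO_ (gqopp (gf x)) (gqopp (gs x)).
Definition goscale c (x : GO T) := GO_ (gqscale c (gf x)) (gqscale c (gs x)).
Definition goconj (x : GO T) := GO_ (gqconj (gf x)) (gqopp (gs x)).
Definition gomul (x y : GO T) :=
  let a := gf x in let b := gs x in let c := gf y in let d := gs y in
  GO_ (gqadd (gqmul a c) (gqscale (oNu o) (gqmul (gqconj d) b)))
      (gqadd (gqmul d a) (gqmul b (gqconj c))).
Definition gdg (a : T) := GO_ (GQ_ a Z Z Z) (GQ_ Z Z Z Z).
Definition gment (x : GH T) (i j : nat) : GO T :=
  match i, j with
  | 0, 0 => gdg (hd1 x) | 1, 1 => gdg (hd2 x) | 2, 2 => gdg (hd3 x)
  | 1, 2 => ho1 x | 2, 1 => goconj (ho1 x)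
  | 2, 0 => ho2 x | 0, 2 => goconj (ho2 x)
  | 0, 1 => ho3 x | 1, 0 => goconj (ho3 x)
  | _, _ => gdg Z end.
Definition gmm (x y : GH T) (i j : nat) : GO T :=
  goadd (goadd (gomul (gment x i 0) (gment y 0 j)) (gomul (gment x i 1) (gment y 1 j)))
        (gomul (gment x i 2) (gment y 2 j)).
Definition gQe (x y : GH T) i j := goadd (gmm x y i j) (gmm y x i j).
Definition gP (x y : GH T) : GH T :=
  let H := oH o in
  GH_ (mul H (g0 (gf (gQe x y 0 0)))) (mul H (g0 (gf (gQe x y 1 1)))) (mul H (g0 (gf (gQe x y 2 2))))
      (goscale H (gQe x y 1 2)) (goscale H (gQe x y 2 0)) (goscale H (gQe x y 0 1)).
Definition ghadd (x y : GH T) := GH_ (add (hd1 x) (hd1 y)) (add (hd2 x) (hd2 y)) (add (hd3 x) (hd3 y))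
  (goadd (ho1 x) (ho1 y)) (goadd (ho2 x) (ho2 y)) (goadd (ho3 x) (ho3 y)).
Definition ghopp (x : GH T) := GH_ (opp (hd1 x)) (opp (hd2 x)) (opp (hd3 x))
  (goopp (ho1 x)) (goopp (ho2 x)) (goopp (ho3 x)).
Definition ghsub x y := ghadd x (ghopp y).
Definition gosub x y := goadd x (goopp y).
Definition ghscale c (x : GH T) := GH_ (mul c (hd1 x)) (mul c (hd2 x)) (mul c (hd3 x))
  (goscale c (ho1 x)) (goscale c (ho2 x)) (goscale c (ho3 x)).
Definition gone : GH T := GH_ (oI o) (oI o) (oI o) (gdg Z) (gdg Z) (gdg Z).
Definition gtr (x : GH T) := add (add (hd1 x) (hd2 x)) (hd3 x).
Definition gqlist (a : GQ T) := [:: g0 a; g1 a; g2 a; g3 a].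
Definition golist (a : GO T) := gqlist (gf a) ++ gqlist (gs a).
Definition hlist (x : GH T) := [:: hd1 x; hd2 x; hd3 x] ++ golist (ho1 x) ++ golist (ho2 x) ++ golist (ho3 x).
Definition hofl (f : nat -> T) : GH T :=
  GH_ (f 0) (f 1) (f 2)
   (GO_ (GQ_ (f 3) (f 4) (f 5) (f 6)) (GQ_ (f 7) (f 8) (f 9) (f 10)))
   (GO_ (GQ_ (f 11) (f 12) (f 13) (f 14)) (GQ_ (f 15) (f 16) (f 17) (f 18)))
   (GO_ (GQ_ (f 19) (f 20) (f 21) (f 22)) (GQ_ (f 23) (f 24) (f 25) (f 26))).
Definition JFexpr s x y :=
  let P := gP in
  ghsub (ghadd (P (P (P s s) y) x) (let t := P (P (P s x) y) s in ghadd t t))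
        (ghadd (P (P s s) (P y x)) (let t := P (P s x) (P y s) in ghadd t t)).
Definition JGexpr s b c :=
  let P := gP in let L v := P s v in
  ghsub (ghadd (ghadd (P c (L (L b))) (L (L (P b c)))) (P b (L (L c))))
        (ghadd (let t := P (L b) (L c) in ghadd t t) (P (P b c) (P s s))).
Definition Cexpr x y := ghsub (gP x y) (gP y x).
Definition Bexpr a x y z := ghsub (gP (ghadd (ghscale a x) y) z) (ghadd (ghscale a (gP x z)) (gP y z)).
Definition Oexpr x := ghsub (gP gone x) (ghscale (add (oH o) (oH o)) x).
Definition Texpr a b c := sub (gtr (gP (gP a b) c)) (gtr (gP a (gP b c))).
Definition Mexpr x y i j := gosub (gment (gP x y) i j) (goscale (oH o) (gQe x y i j)).
Definition gram : seq T :=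
  let h2 := add (oH o) (oH o) in let h4 := add h2 h2 in
  let lam := oL o in let mu := oMu o in let nu := oNu o in
  let oc := [:: h4; opp (mul h4 lam); opp (mul h4 mu); mul h4 (mul lam mu);
               opp (mul h4 nu); mul h4 (mul nu lam); mul h4 (mul nu mu); opp (mul h4 (mul nu (mul lam mu)))] in
  [:: h2; h2; h2] ++ oc ++ oc ++ oc.
Fixpoint dotg (g a b : seq T) : T :=
  match g, a, b with
  | c :: g', u :: a', v :: b' => add (mul c (mul u v)) (dotg g' a' b')
  | _, _, _ => Z end.
Definition Gexpr x y := sub (gtr (gP x y)) (dotg gram (hlist x) (hlist y)).
End Gen.

End S1.
Import S1.

Module S2.
Import GRing.Theory.
Local Open Scope ring_scope.

Section Morph.
Variables (T T' : Type) (o : ops T) (o' : ops T') (f : T -> T').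
Record homP : Prop := HomP {
  hA : forall a b, f (oA o a b) = oA o' (f a) (f b);
  hM : forall a b, f (oM o a b) = oM o' (f a) (f b);
  hN : forall a, f (oN o a) = oN o' (f a);
  hZ : f (oZ o) = oZ o'; hI : f (oI o) = oI o'; hL : f (oL o) = oL o';
  hMu : f (oMu o) = oMu o'; hNu : f (oNu o) = oNu o'; hH : f (oH o) = oH o' }.
Hypothesis hom : homP.
Let fA := hA hom. Let fM := hM hom. Let fN := hN hom. Let fZ := hZ hom. Let fI := hI hom.
Let fL := hL hom. Let fMu := hMu hom. Let fNu := hNu hom. Let fH := hH hom.
Definition mapQ (a : GQ T) := GQ_ (f (g0 a)) (f (g1 a)) (f (g2 a)) (f (g3 a)).
Definition mapO (a : GO T) := GO_ (mapQ (gf a)) (mapQ (gs a)).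
Definition mapH (a : GH T) := GH_ (f (hd1 a)) (f (hd2 a)) (f (hd3 a)) (mapO (ho1 a)) (mapO (ho2 a)) (mapO (ho3 a)).
Arguments mapQ : simpl never.
Arguments mapO : simpl never.
Ltac mt := rewrite /= ?fA ?fM ?fN ?fZ ?fI ?fL ?fMu ?fNu ?fH.
Lemma mapQ_add a b : mapQ (gqadd o a b) = gqadd o' (mapQ a) (mapQ b). Proof. by rewrite /mapQ /=; mt. Qed.
Lemma mapQ_scale c a : mapQ (gqscale o c a) = gqscale o' (f c) (mapQ a). Proof. by rewrite /mapQ /=; mt. Qed.
Lemma mapQ_opp a : mapQ (gqopp o a) = gqopp o' (mapQ a). Proof. by rewrite /mapQ /=; mt. Qed.
Lemma mapQ_conj a : mapQ (gqconj o a) = gqconj o' (mapQ a). Proof. by rewrite /mapQ /=; mt. Qed.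
Lemma mapQ_mul a b : mapQ (gqmul o a b) = gqmul o' (mapQ a) (mapQ b).
Proof. by rewrite /mapQ /=; rewrite !fA !fN !fM !fL !fMu. Qed.
Lemma mapO_add a b : mapO (goadd o a b) = goadd o' (mapO a) (mapO b).
Proof. by rewrite /mapO /= !mapQ_add. Qed.
Lemma mapO_opp a : mapO (goopp o a) = goopp o' (mapO a).
Proof. by rewrite /mapO /= !mapQ_opp. Qed.
Lemma mapO_scale c a : mapO (goscale o c a) = goscale o' (f c) (mapO a).
Proof. by rewrite /mapO /= !mapQ_scale. Qed.
Lemma mapO_conj a : mapO (goconj o a) = goconj o' (mapO a).
Proof. by rewrite /mapO /= mapQ_conj mapQ_opp. Qed.
Lemma mapO_mul a b : mapO (gomul o a b) = gomul o' (mapO a) (mapO b).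
Proof. rewrite /mapO /gomul /=. by rewrite !(mapQ_add, mapQ_mul, mapQ_scale, mapQ_conj) fNu. Qed.
Lemma mapO_dg a : mapO (gdg o a) = gdg o' (f a).
Proof. by rewrite /mapO /mapQ /= fZ. Qed.
Lemma mapO_ment x i j : mapO (gment o x i j) = gment o' (mapH x) i j.
Proof.
case: i => [|[|[|i]]]; case: j => [|[|[|j]]]; by rewrite /= ?mapO_dg ?mapO_conj ?fZ.
Qed.
Lemma mapO_mm x y i j : mapO (gmm o x y i j) = gmm o' (mapH x) (mapH y) i j.
Proof. by rewrite /gmm !mapO_add !mapO_mul !mapO_ment. Qed.
Lemma mapO_Qe x y i j : mapO (gQe o x y i j) = gQe o' (mapH x) (mapH y) i j.
Proof. by rewrite /gQe mapO_add !mapO_mm. Qed.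
Lemma mapH_P x y : mapH (gP o x y) = gP o' (mapH x) (mapH y).
Proof.
have e X : f (g0 (gf X)) = g0 (gf (mapO X)) by [].
rewrite /gP /mapH; cbn [hd1 hd2 hd3 ho1 ho2 ho3]; rewrite !fM !e !mapO_scale !mapO_Qe fH //.
Qed.
Lemma mapH_add x y : mapH (ghadd o x y) = ghadd o' (mapH x) (mapH y).
Proof. by rewrite /mapH /= !fA !mapO_add. Qed.
Lemma mapH_opp x : mapH (ghopp o x) = ghopp o' (mapH x).
Proof. by rewrite /mapH /= !fN !mapO_opp. Qed.
Lemma mapH_sub x y : mapH (ghsub o x y) = ghsub o' (mapH x) (mapH y).
Proof. by rewrite /ghsub mapH_add mapH_opp. Qed.
Lemma mapH_scale c x : mapH (ghscale o c x) = ghscale o' (f c) (mapH x).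
Proof. by rewrite /mapH /= !fM !mapO_scale. Qed.
Lemma mapH_one : mapH (gone o) = gone o'.
Proof. by rewrite /mapH /gone /= fI mapO_dg fZ. Qed.
Lemma map_tr x : f (gtr o x) = gtr o' (mapH x).
Proof. by rewrite /gtr !fA. Qed.
Lemma mapH_JF s x y : mapH (JFexpr o s x y) = JFexpr o' (mapH s) (mapH x) (mapH y).
Proof. by rewrite /JFexpr !(mapH_sub, mapH_add, mapH_P). Qed.
Lemma mapH_JG s x y : mapH (JGexpr o s x y) = JGexpr o' (mapH s) (mapH x) (mapH y).
Proof. by rewrite /JGexpr !(mapH_sub, mapH_add, mapH_P). Qed.
Lemma mapH_C x y : mapH (Cexpr o x y) = Cexpr o' (mapH x) (mapH y).
Proof. by rewrite /Cexpr !(mapH_sub, mapH_add, mapH_P). Qed.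
Lemma mapH_B a x y z : mapH (Bexpr o a x y z) = Bexpr o' (f a) (mapH x) (mapH y) (mapH z).
Proof. by rewrite /Bexpr !(mapH_sub, mapH_add, mapH_P, mapH_scale). Qed.
Lemma mapH_O x : mapH (Oexpr o x) = Oexpr o' (mapH x).
Proof. by rewrite /Oexpr !(mapH_sub, mapH_add, mapH_P, mapH_scale, mapH_one) fA fH. Qed.
Lemma map_T a b c : f (Texpr o a b c) = Texpr o' (mapH a) (mapH b) (mapH c).
Proof. by rewrite /Texpr fA fN !map_tr !mapH_P. Qed.
Lemma mapO_M x y i j : mapO (Mexpr o x y i j) = Mexpr o' (mapH x) (mapH y) i j.
Proof. by rewrite /Mexpr /gosub mapO_add mapO_opp mapO_ment mapO_scale mapO_Qe mapH_P fH. Qed.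
Lemma map_dotg g a b : size g = size a -> size a = size b ->
  f (dotg o g a b) = dotg o' (map f g) (map f a) (map f b).
Proof.
elim: g a b => [|c g IH] [|u a] [|v b] //= [e1] [e2].
by rewrite fA fM fM IH.
Qed.
Lemma map_gram : map f (gram o) = gram o'.
Proof. by rewrite /gram /= !(fA, fN, fM, fL, fMu, fNu, fH). Qed.
Lemma map_hlist x : map f (hlist x) = hlist (mapH x).
Proof. by []. Qed.
Lemma map_G x y : f (Gexpr o x y) = Gexpr o' (mapH x) (mapH y).
Proof. by rewrite /Gexpr fA fN map_tr mapH_P map_dotg // map_gram. Qed.
End Morph.

End S2.
Import S2.

Module S3.
Import GRing.Theory.
Local Open Scope ring_scope.

Definition zpol := Pol Z.
Definition padd : zpol -> zpol -> zpol := Padd Z0 Z.add Zeq_bool.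
Definition pmul : zpol -> zpol -> zpol := Pmul Z0 (Zpos xH) Z.add Z.mul Zeq_bool.
Definition popp : zpol -> zpol := Popp Z.opp.
Definition pvar (i : nat) : zpol := mk_X Z0 (Zpos xH) (Pos.of_succ_nat i).
Definition opsP : ops zpol := Ops padd pmul popp (Pc Z0) (Pc (Zpos xH)) (pvar 81) (pvar 82) (pvar 83) (pvar 84).
Definition varH (k : nat) : GH zpol := hofl (fun i => pvar (i + k)).
Definition isz (p : zpol) := match p with Pc c => Zeq_bool c Z0 | _ => false end.
Definition allz (x : GH zpol) := all isz (hlist x).
Definition allzO (x : GO zpol) := all isz (golist x).

Lemma JFok : allz (JFexpr opsP (varH 0) (varH 27) (varH 54)). Proof. by vm_compute. Qed.
Lemma JGok : allz (JGexpr opsP (varH 0) (varH 27) (varH 54)). Proof. by vm_compute. Qed.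
Lemma Cok : allz (Cexpr opsP (varH 0) (varH 27)). Proof. by vm_compute. Qed.
Lemma Bok : allz (Bexpr opsP (pvar 85) (varH 0) (varH 27) (varH 54)). Proof. by vm_compute. Qed.
Lemma Ook : allz (Oexpr opsP (varH 0)). Proof. by vm_compute. Qed.
Lemma Tok : isz (Texpr opsP (varH 0) (varH 27) (varH 54)). Proof. by vm_compute. Qed.
Lemma Gok : isz (Gexpr opsP (varH 0) (varH 27)). Proof. by vm_compute. Qed.
Lemma Mok00 : allzO (Mexpr opsP (varH 0) (varH 27) 0 0). Proof. by vm_compute. Qed.
Lemma Mok01 : allzO (Mexpr opsP (varH 0) (varH 27) 0 1). Proof. by vm_compute. Qed.
Lemma Mok02 : allzO (Mexpr opsP (varH 0) (varH 27) 0 2). Proof. by vm_compute. Qed.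
Lemma Mok10 : allzO (Mexpr opsP (varH 0) (varH 27) 1 0). Proof. by vm_compute. Qed.
Lemma Mok11 : allzO (Mexpr opsP (varH 0) (varH 27) 1 1). Proof. by vm_compute. Qed.
Lemma Mok12 : allzO (Mexpr opsP (varH 0) (varH 27) 1 2). Proof. by vm_compute. Qed.
Lemma Mok20 : allzO (Mexpr opsP (varH 0) (varH 27) 2 0). Proof. by vm_compute. Qed.
Lemma Mok21 : allzO (Mexpr opsP (varH 0) (varH 27) 2 1). Proof. by vm_compute. Qed.
Lemma Mok22 : allzO (Mexpr opsP (varH 0) (varH 27) 2 2). Proof. by vm_compute. Qed.

End S3.
Import S3.

Module S4.
Import GRing.Theory.
Local Open Scope ring_scope.

Section FLevel.
Variable F : fieldType.
Variables lam mu nu : F.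

Definition opsF : ops F := Ops +%R *%R -%R 0 1 lam mu nu (2%:R)^-1.

Lemma RthF : @ring_theory F 0 1 +%R *%R (fun x y => x - y) -%R eq.
Proof.
split => //.
- exact: add0r. - exact: addrC. - exact: addrA. - exact: mul1r. - exact: mulrC.
- exact: mulrA. - exact: mulrDl. - move=> x; exact: subrr.
Qed.
Definition phiF := gen_phiZ (0:F) 1 +%R *%R -%R.
Definition CRm := gen_phiZ_morph (Eqsth F) (Eq_ext _ _ _) RthF.
Definition ARthF := Rth_ARth (Eqsth F) (Eq_ext _ _ _) RthF.

Section Env.
Variable l : seq F.
Definition ev (p : zpol) : F := Pphi 0 +%R *%R phiF l p.
Lemma ev_add a b : ev (padd a b) = ev a + ev b.
Proof. exact: (Padd_ok (Eqsth F) (Eq_ext _ _ _) ARthF CRm). Qed.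
Lemma ev_mul a b : ev (pmul a b) = ev a * ev b.
Proof. exact: (Pmul_ok (Eqsth F) (Eq_ext _ _ _) ARthF CRm). Qed.
Lemma ev_opp a : ev (popp a) = - ev a.
Proof. exact: (Popp_ok (Eqsth F) (Eq_ext _ _ _) ARthF CRm). Qed.
Lemma ev_var i : ev (pvar i) = BinList.nth 0 (Pos.of_succ_nat i) l.
Proof. by rewrite /ev /pvar -(mkX_ok (Eqsth F) (Eq_ext _ _ _) ARthF CRm). Qed.
Lemma isz_ev p : isz p -> ev p = 0.
Proof. by case: p => // c /= /Zeq_bool_eq ->. Qed.
End Env.

Lemma hlist_inj (a b : GH F) : hlist a = hlist b -> a = b.
Proof.
case: a => a1 a2 a3 [[? ? ? ?] [? ? ? ?]] [[? ? ? ?] [? ? ? ?]] [[? ? ? ?] [? ? ? ?]].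
case: b => b1 b2 b3 [[? ? ? ?] [? ? ? ?]] [[? ? ? ?] [? ? ? ?]] [[? ? ? ?] [? ? ? ?]].
by case=> *; subst.
Qed.
Lemma golist_inj (a b : GO F) : golist a = golist b -> a = b.
Proof.
case: a => [[? ? ? ?] [? ? ? ?]]; case: b => [[? ? ? ?] [? ? ? ?]].
by case=> *; subst.
Qed.

Definition zH : GH F := hofl (fun _ => 0).
Definition zO : GO F := gdg opsF 0.

Lemma all_map0 l (s : seq zpol) : all isz s -> map (ev l) s = map (fun _ => 0) s.
Proof. elim: s => //= p s IH /andP[/isz_ev -> /IH ->]. by []. Qed.

Lemma allz_ev l E : allz E -> mapH (ev l) E = zH.
Proof.
rewrite /allz => H; apply: hlist_inj.
rewrite -map_hlist (all_map0 l H).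
by case: E {H} => ? ? ? [[? ? ? ?] [? ? ? ?]] [[? ? ? ?] [? ? ? ?]] [[? ? ? ?] [? ? ? ?]].
Qed.
Lemma allzO_ev l E : allzO E -> mapO (ev l) E = zO.
Proof.
rewrite /allzO => H; apply: golist_inj.
have -> : golist (mapO (ev l) E) = map (ev l) (golist E) by [].
rewrite (all_map0 l H).
by case: E {H} => [[? ? ? ?] [? ? ? ?]].
Qed.

Definition envl (s x y : GH F) (a : F) := hlist s ++ hlist x ++ hlist y ++ [:: lam; mu; nu; (2%:R)^-1; a].

Section Vars.
Variables (s x y : GH F) (a : F).
Let l := envl s x y a.
Lemma ev_ops : [/\ (forall u v, ev l (oA opsP u v) = oA opsF (ev l u) (ev l v)),
   (forall u v, ev l (oM opsP u v) = oM opsF (ev l u) (ev l v)),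
   (forall u, ev l (oN opsP u) = oN opsF (ev l u)),
   ev l (oZ opsP) = oZ opsF & ev l (oI opsP) = oI opsF].
Proof. split; [exact: ev_add|exact: ev_mul|exact: ev_opp|by []|by []]. Qed.
Lemma ev_consts : [/\ ev l (oL opsP) = oL opsF, ev l (oMu opsP) = oMu opsF,
   ev l (oNu opsP) = oNu opsF & ev l (oH opsP) = oH opsF].
Proof.
have E i : ev l (pvar i) = BinList.nth 0 (Pos.of_succ_nat i) l := ev_var l i.
split; rewrite [LHS]E /l /envl;
by case: s x y => ? ? ? [[? ? ? ?] [? ? ? ?]] [[? ? ? ?] [? ? ? ?]] [[? ? ? ?] [? ? ? ?]]
  [? ? ? [[? ? ? ?] [? ? ? ?]] [[? ? ? ?] [? ? ? ?]] [[? ? ? ?] [? ? ? ?]]]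
  [? ? ? [[? ? ? ?] [? ? ? ?]] [[? ? ? ?] [? ? ? ?]] [[? ? ? ?] [? ? ? ?]]].
Qed.

Let fA := ev_add l. Let fM := ev_mul l. Let fN := ev_opp l.
Let fZ : ev l (oZ opsP) = oZ opsF := erefl.
Let fI : ev l (oI opsP) = oI opsF := erefl.
Let fL : ev l (oL opsP) = oL opsF. Proof. by case: ev_consts. Qed.
Let fMu : ev l (oMu opsP) = oMu opsF. Proof. by case: ev_consts. Qed.
Let fNu : ev l (oNu opsP) = oNu opsF. Proof. by case: ev_consts. Qed.
Let fH : ev l (oH opsP) = oH opsF. Proof. by case: ev_consts. Qed.
Let hom : homP opsP opsF (ev l) := @HomP _ _ opsP opsF (ev l) fA fM fN fZ fI fL fMu fNu fH.

Lemma ev_varH : [/\ mapH (ev l) (varH 0) = s, mapH (ev l) (varH 27) = x,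
   mapH (ev l) (varH 54) = y & ev l (pvar 85) = a].
Proof.
have E i : ev l (pvar i) = BinList.nth 0 (Pos.of_succ_nat i) l := ev_var l i.
have H k : hlist (mapH (ev l) (varH k)) = map (fun i => BinList.nth 0 (Pos.of_succ_nat i) l) (iota k 27).
  rewrite -map_hlist.
  have -> : hlist (varH k) = map pvar (iota k 27) by [].
  by rewrite -map_comp; apply: eq_map => i /=; apply: E.
split; try apply: hlist_inj; rewrite ?H ?E /l /envl;
by case: s x y => ? ? ? [[? ? ? ?] [? ? ? ?]] [[? ? ? ?] [? ? ? ?]] [[? ? ? ?] [? ? ? ?]]
  [? ? ? [[? ? ? ?] [? ? ? ?]] [[? ? ? ?] [? ? ? ?]] [[? ? ? ?] [? ? ? ?]]]
  [? ? ? [[? ? ? ?] [? ? ? ?]] [[? ? ? ?] [? ? ? ?]] [[? ? ? ?] [? ? ? ?]]].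
Qed.

Lemma JF_l : JFexpr opsF s x y = zH.
Proof.
have := allz_ev l JFok; rewrite (@mapH_JF _ _ opsP opsF (ev l) hom).
by case: ev_varH => -> -> -> _.
Qed.
Lemma JG_l : JGexpr opsF s x y = zH.
Proof.
have := allz_ev l JGok; rewrite (@mapH_JG _ _ opsP opsF (ev l) hom).
by case: ev_varH => -> -> -> _.
Qed.
Lemma C_l : Cexpr opsF s x = zH.
Proof.
have := allz_ev l Cok; rewrite (@mapH_C _ _ opsP opsF (ev l) hom).
by case: ev_varH => -> -> _ _.
Qed.
Lemma B_l : Bexpr opsF a s x y = zH.
Proof.
have := allz_ev l Bok; rewrite (@mapH_B _ _ opsP opsF (ev l) hom).
by case: ev_varH => -> -> -> ->.
Qed.
Lemma O_l : Oexpr opsF s = zH.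
Proof.
have := allz_ev l Ook; rewrite (@mapH_O _ _ opsP opsF (ev l) hom).
by case: ev_varH => -> _ _ _.
Qed.
Lemma T_l : Texpr opsF s x y = 0.
Proof.
have := isz_ev l Tok; rewrite (@map_T _ _ opsP opsF (ev l) hom).
by case: ev_varH => -> -> -> _.
Qed.
Lemma G_l : Gexpr opsF s x = 0.
Proof.
have := isz_ev l Gok; rewrite (@map_G _ _ opsP opsF (ev l) hom).
by case: ev_varH => -> -> _ _.
Qed.
Lemma M_l i j : (i < 3)%N -> (j < 3)%N -> Mexpr opsF s x i j = zO.
Proof.
move=> hi hj.
have : allzO (Mexpr opsP (varH 0) (varH 27) i j).
  case: i hi => [|[|[|i]]] hi; last by [];
  (case: j hj => [|[|[|j]]] hj; last by []);
  [exact: Mok00|exact: Mok01|exact: Mok02|exact: Mok10|exact: Mok11|exact: Mok12|exact: Mok20|exact: Mok21|exact: Mok22].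
move/(allzO_ev l); rewrite (@mapO_M _ _ opsP opsF (ev l) hom).
by case: ev_varH => -> -> _ _.
Qed.
End Vars.
End FLevel.

End S4.
Import S4.

Module J.
Import GRing.Theory.
Local Open Scope ring_scope.

Section Jordan.
Variables (K : fieldType) (V : lmodType K) (p : V -> V -> V) (one : V) (tr : V -> K).
Hypothesis h2 : (2%:R : K) != 0.
Hypothesis pC : forall u v, p u v = p v u.
Hypothesis pL : forall c u v w, p (c *: u + v) w = c *: p u w + p v w.
Hypothesis p1 : forall u, p one u = u.
Hypothesis JF : forall s x y, p (p (p s s) y) x + (p (p (p s x) y) s + p (p (p s x) y) s)
   = p (p s s) (p y x) + (p (p s x) (p y s) + p (p s x) (p y s)).
Hypothesis JG : forall s b c, p c (p s (p s b)) + p s (p s (p b c)) + p b (p s (p s c))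
   = (p (p s b) (p s c) + p (p s b) (p s c)) + p (p b c) (p s s).
Hypothesis trL : forall c u v, tr (c *: u + v) = c * tr u + tr v.
Hypothesis trA : forall a b c, tr (p (p a b) c) = tr (p a (p b c)).

Lemma p0l w : p 0 w = 0.
Proof.
have := pL 1 0 0 w; rewrite !scale1r !addr0 => H.
have : p 0 w + 0 = p 0 w + p 0 w by rewrite addr0 -H.
by move/addrI/esym.
Qed.
Lemma pDl u v w : p (u + v) w = p u w + p v w.
Proof. by rewrite -[u]scale1r pL !scale1r. Qed.
Lemma pZl c u w : p (c *: u) w = c *: p u w.
Proof. by rewrite -[c *: u]addr0 pL p0l addr0. Qed.
Lemma pNl u w : p (- u) w = - p u w.
Proof. by rewrite -scaleN1r pZl scaleN1r. Qed.
Lemma pBl u v w : p (u - v) w = p u w - p v w.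
Proof. by rewrite pDl pNl. Qed.
Lemma pDr u v w : p w (u + v) = p w u + p w v.
Proof. by rewrite pC pDl -!(pC w). Qed.
Lemma pZr c u w : p w (c *: u) = c *: p w u.
Proof. by rewrite pC pZl pC. Qed.
Lemma pNr u w : p w (- u) = - p w u.
Proof. by rewrite pC pNl pC. Qed.
Lemma pBr u v w : p w (u - v) = p w u - p w v.
Proof. by rewrite pDr pNr. Qed.
Lemma p0r w : p w 0 = 0.
Proof. by rewrite pC p0l. Qed.

Lemma half_inj (a b : V) : a + a = b + b -> a = b.
Proof.
rewrite -!mulr2n -!scaler_nat => /(congr1 (fun v => (2%:R)^-1 *: v)).
by rewrite !scalerA mulVf // !scale1r.
Qed.

Lemma cancel4 (a b d e : V) : a + b + (b + d) = a + e + (e + d) -> b = e.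
Proof.
rewrite -!addrA => /addrI; rewrite !addrA => /addIr; exact: half_inj.
Qed.

Lemma polar (f : V -> V) (fadd : forall a b, f (a + b) = f a + f b)
  (fsq : forall a, f (p a a) = p (f a) (f a)) a b : f (p a b) = p (f a) (f b).
Proof.
have := fsq (a + b).
rewrite pDl !pDr !fadd !fsq [p b a]pC pDl !pDr [p (f b) (f a)]pC.
exact: cancel4.
Qed.

Variable s : V.
Hypothesis hs : p s s = one.
Local Notation L := (p s).

Lemma star x y : L (p (L x) y) = p (L x) (L y).
Proof.
have := JF s x y; rewrite hs !p1 => /addrI.
by rewrite [p (p (p s x) y) s]pC [p y s]pC; apply: half_inj.
Qed.
Lemma L3 x : L (L (L x)) = L x.
Proof. by have := star x s; rewrite hs [p (L x) one]pC p1 [p (L x) s]pC. Qed.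
Lemma Gs b c : p c (L (L b)) + L (L (p b c)) + p b (L (L c)) = (p (L b) (L c) + p (L b) (L c)) + p b c.
Proof. by have := JG s b c; rewrite hs [p (p b c) one]pC p1. Qed.

Definition U x := locked ((L (L x) + L (L x)) - x).
Lemma U_def x : U x = (L (L x) + L (L x)) - x. Proof. by rewrite /U -lock. Qed.
Lemma L0 : L 0 = 0. Proof. exact: p0r. Qed.
Lemma U_add a b : U (a + b) = U a + U b.
Proof.
rewrite !U_def !pDr [L (L a) + L (L b) + _]addrACA opprD.
by rewrite [(_ + _) + (- a + - b)]addrACA.
Qed.
Lemma U_opp a : U (- a) = - U a.
Proof. by rewrite !U_def !pNr -opprD opprB opprK addrC. Qed.

Lemma U_sq x : U (p x x) = p (U x) (U x).
Proof.
set w := L (L x); set z := x - w.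
have Lz0 : L z = 0 by rewrite /z pBr /w L3 subrr.
have LLw : L (L w) = w by rewrite /w L3.
have hx : x = w + z by rewrite /z addrC subrK.
have hUx : U x = w - z by rewrite !U_def -/w hx opprD addrA addrK.
have hzz : L (L (p z z)) = p z z.
  by have := Gs z z; rewrite Lz0 !L0 !p0r add0r addr0 !add0r.
have hwz : L (p w z) = 0.
  by have := star (L x) z; rewrite -/w Lz0 p0r.
have hww : L (L (p w w)) = p w w.
  have e1 := star (L x) w; rewrite -/w in e1.
  have e2 := star w w.
  have e3 : L (L (p w w)) = p (L w) (L w) by rewrite e1 [p w (L w)]pC e2.
  have := Gs w w; rewrite LLw e3 => /addIr.
  by rewrite addrC => /addrI ->.
have Uww : U (p w w) = p w w by rewrite !U_def hww addrK.
have Uwz : U (p w z) = - p w z by rewrite !U_def hwz L0 addr0 add0r.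
have Uzz : U (p z z) = p z z by rewrite !U_def hzz addrK.
clearbody w z.
rewrite hUx {1 2}hx pDl !pDr [p z w]pC !U_add Uww Uwz Uzz.
by rewrite pNr !pBl [p z w]pC opprB [- p w z + _]addrC.
Qed.

Lemma U_mul x y : U (p x y) = p (U x) (U y).
Proof.
have := U_sq (x + y); rewrite !U_add !pDl !pDr !U_add !U_sq [p y x]pC [p (U y) (U x)]pC.
by apply: cancel4.
Qed.

Lemma tr0 : tr 0 = 0.
Proof.
have := trL 1 0 0; rewrite !scale1r !addr0 mul1r => H.
have : tr 0 + 0 = tr 0 + tr 0 by rewrite addr0 -H.
by move/addrI/esym.
Qed.
Lemma trD a b : tr (a + b) = tr a + tr b.
Proof. by rewrite -[a]scale1r trL mul1r scale1r. Qed.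
Lemma trN a : tr (- a) = - tr a.
Proof. by rewrite -scaleN1r -[_ *: a]addr0 trL tr0 addr0 mulN1r. Qed.
Lemma tr_U w : tr (U w) = tr w.
Proof.
have e : tr (L (L w)) = tr w by rewrite -trA hs p1.
by rewrite !U_def trD trN trD e addrK.
Qed.
Lemma tr_iso x y : tr (p (U x) (U y)) = tr (p x y).
Proof. by rewrite -U_mul tr_U. Qed.
End Jordan.

End J.
Import J.

Module S5.
Import GRing.Theory.
Local Open Scope ring_scope.

Section Rows.
Variable F : fieldType.
Variables lam mu nu : F.
Hypothesis h2 : (2%:R : F) != 0.
Local Notation opsF := (opsF lam mu nu).
Notation V := 'rV[F]_27.

Definition toRow (x : GH F) : V := \row_(k < 27) nth 0 (hlist x) k.
Definition fromRow (r : V) : GH F := hofl (fun k => r 0 (inord k)).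

Lemma hlist_hofl (f : nat -> F) : hlist (hofl f) = map f (iota 0 27).
Proof. by []. Qed.

Lemma fromRowK x : fromRow (toRow x) = x.
Proof.
apply: hlist_inj; rewrite /fromRow hlist_hofl.
have -> : hlist x = map (nth 0 (hlist x)) (iota 0 27).
  by case: x => ? ? ? [[? ? ? ?] [? ? ? ?]] [[? ? ? ?] [? ? ? ?]] [[? ? ? ?] [? ? ? ?]].
apply/eq_in_map => k; rewrite mem_iota add0n => /andP[_ hk].
by rewrite mxE inordK.
Qed.
Lemma toRowK r : toRow (fromRow r) = r.
Proof.
apply/rowP => k; rewrite mxE /fromRow hlist_hofl (nth_map 0) ?size_iota //.
by rewrite nth_iota // add0n inord_val.
Qed.
Lemma toRow_inj : injective toRow. Proof. exact: can_inj fromRowK. Qed.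
Lemma fromRow_inj : injective fromRow. Proof. exact: can_inj toRowK. Qed.

Lemma fromRow_lin c u v : fromRow (c *: u + v) = ghadd opsF (ghscale opsF c (fromRow u)) (fromRow v).
Proof. by rewrite /fromRow /hofl !mxE. Qed.
Lemma fromRow_add u v : fromRow (u + v) = ghadd opsF (fromRow u) (fromRow v).
Proof. by rewrite /fromRow /hofl !mxE. Qed.
Lemma fromRow_opp u : fromRow (- u) = ghopp opsF (fromRow u).
Proof. by rewrite /fromRow /hofl !mxE. Qed.
Lemma fromRow0 : fromRow 0 = zH F.
Proof. by rewrite /fromRow /hofl !mxE. Qed.
Lemma toRow_add a b : toRow (ghadd opsF a b) = toRow a + toRow b.
Proof. by apply: fromRow_inj; rewrite fromRow_add !fromRowK. Qed.
Lemma toRow_opp a : toRow (ghopp opsF a) = - toRow a.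
Proof. by apply: fromRow_inj; rewrite fromRow_opp !fromRowK. Qed.
Lemma toRow_lin c a b : toRow (ghadd opsF (ghscale opsF c a) b) = c *: toRow a + toRow b.
Proof. by apply: fromRow_inj; rewrite fromRow_lin !fromRowK. Qed.
Lemma toRow0 : toRow (zH F) = 0.
Proof. by apply: fromRow_inj; rewrite fromRow0 fromRowK. Qed.
Lemma ghsub_eq0 a b : ghsub opsF a b = zH F -> a = b.
Proof.
move/(congr1 toRow); rewrite /ghsub toRow_add toRow_opp toRow0 => /eqP.
by rewrite subr_eq0 => /eqP /toRow_inj.
Qed.

Definition p (u v : V) : V := toRow (gP opsF (fromRow u) (fromRow v)).
Definition onev : V := toRow (gone opsF).
Definition tr_r (u : V) : F := gtr opsF (fromRow u).

Lemma gP_fromRow a b : gP opsF (fromRow a) (fromRow b) = fromRow (p a b).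
Proof. by rewrite /p fromRowK. Qed.

Lemma ghscale1 X : ghscale opsF 1 X = X.
Proof.
by case: X => ? ? ? [[? ? ? ?] [? ? ? ?]] [[? ? ? ?] [? ? ? ?]] [[? ? ? ?] [? ? ? ?]];
  rewrite /ghscale /goscale /gqscale /= !mul1r.
Qed.

Lemma pC u v : p u v = p v u.
Proof. by rewrite /p (ghsub_eq0 (C_l lam mu nu _ _ (zH F) 0)). Qed.
Lemma pL c u v w : p (c *: u + v) w = c *: p u w + p v w.
Proof.
by rewrite /p fromRow_lin (ghsub_eq0 (B_l lam mu nu _ _ _ _)) toRow_lin.
Qed.
Lemma p1 u : p onev u = u.
Proof.
have hh : oA opsF (oH opsF) (oH opsF) = 1.
  by rewrite /=; field.
rewrite /p /onev fromRowK (ghsub_eq0 (O_l lam mu nu _ (zH F) (zH F) 0)) hh.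
by rewrite ghscale1 toRowK.
Qed.

Lemma JFr s x y : p (p (p s s) y) x + (p (p (p s x) y) s + p (p (p s x) y) s)
   = p (p s s) (p y x) + (p (p s x) (p y s) + p (p s x) (p y s)).
Proof.
have := ghsub_eq0 (JF_l lam mu nu (fromRow s) (fromRow x) (fromRow y) 0).
rewrite /JFexpr; cbv zeta; rewrite !gP_fromRow => /(congr1 toRow).
by rewrite !toRow_add !toRowK.
Qed.
Lemma JGr s b c : p c (p s (p s b)) + p s (p s (p b c)) + p b (p s (p s c))
   = (p (p s b) (p s c) + p (p s b) (p s c)) + p (p b c) (p s s).
Proof.
have := ghsub_eq0 (JG_l lam mu nu (fromRow s) (fromRow b) (fromRow c) 0).
rewrite /JGexpr; cbv zeta; rewrite !gP_fromRow => /(congr1 toRow).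
by rewrite !toRow_add !toRowK.
Qed.
Lemma trL c u v : tr_r (c *: u + v) = c * tr_r u + tr_r v.
Proof. rewrite /tr_r fromRow_lin /gtr /=; ring. Qed.
Lemma trA a b c : tr_r (p (p a b) c) = tr_r (p a (p b c)).
Proof.
have := T_l lam mu nu (fromRow a) (fromRow b) (fromRow c) 0.
by rewrite /Texpr !gP_fromRow => /subr0_eq.
Qed.

Lemma dotg_sum (g a b : seq F) : size g = size a -> size a = size b ->
  dotg opsF g a b = \sum_(k < size g) nth 0 g k * (nth 0 a k * nth 0 b k).
Proof.
elim: g a b => [|c g IH] [|u a] [|v b] //=; first by rewrite big_ord0.
by move=> [e1] [e2]; rewrite big_ord_recl /= IH.
Qed.

Definition gr : V := \row_(k < 27) nth 0 (gram opsF) k.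
Definition Bm (u v : V) : F := (u *m diag_mx gr *m v^T) 0 0.

Lemma Bm_sum u v : Bm u v = \sum_(k < 27) u 0 k * gr 0 k * v 0 k.
Proof.
rewrite /Bm mxE; apply: eq_bigr => k _.
by rewrite mul_mx_diag !mxE.
Qed.

Lemma tr_Bm u v : tr_r (p u v) = Bm u v.
Proof.
have := G_l lam mu nu (fromRow u) (fromRow v) (zH F) 0.
rewrite /Gexpr gP_fromRow /tr_r => /subr0_eq ->.
rewrite dotg_sum // Bm_sum.
apply: eq_bigr => k _.
rewrite /fromRow !hlist_hofl !(nth_map 0) ?size_iota // nth_iota // add0n inord_val !mxE.
by rewrite mulrA [_ * u 0 k]mulrC.
Qed.

Lemma gram_neq0 (hl : lam != 0) (hm : mu != 0) (hn : nu != 0) k : (k < 27)%N -> nth 0 (gram opsF) k != 0.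
Proof.
have hh : (2%:R^-1 + 2%:R^-1 : F) = 1 by field.
have h2' : (1 + 1 : F) != 0 by [].
move=> hk; have : all (fun g => g != 0) (gram opsF).
  rewrite /gram /= hh !(oppr_eq0, mulf_eq0, negb_or) hl hm hn h2' /=.
  by rewrite oner_eq0.
by move/all_nthP; apply; rewrite size_cat.
Qed.
End Rows.

End S5.
Import S5.

Module S6.
Import GRing.Theory.
Local Open Scope ring_scope.

Section Mat.
Variable F : fieldType.
Variables lam mu nu : F.
Hypothesis h2 : (2%:R : F) != 0.
Local Notation opsF := (opsF lam mu nu).

Definition toQ (a : GQ F) : quat F := Quat (g0 a) (g1 a) (g2 a) (g3 a).
Definition toO (x : GO F) : oct F := Oct (toQ (gf x)) (toQ (gs x)).
Definition ofO (u : oct F) : GO F :=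
  GO_ (GQ_ (q0 (ofst u)) (q1 (ofst u)) (q2 (ofst u)) (q3 (ofst u)))
      (GQ_ (q0 (osnd u)) (q1 (osnd u)) (q2 (osnd u)) (q3 (osnd u))).
Definition mkH (x : GH F) : mat3 F := \matrix_(i, j) toO (gment opsF x i j).
Definition hc (X : mat3 F) : GH F :=
  GH_ (q0 (ofst (X i0 i0))) (q0 (ofst (X i1 i1))) (q0 (ofst (X i2 i2)))
      (ofO (X i1 i2)) (ofO (X i2 i0)) (ofO (X i0 i1)).

Lemma val_i0 : nat_of_ord i0 = 0%N. Proof. by rewrite /i0 inordK. Qed.
Lemma val_i1 : nat_of_ord i1 = 1%N. Proof. by rewrite /i1 inordK. Qed.
Lemma val_i2 : nat_of_ord i2 = 2%N. Proof. by rewrite /i2 inordK. Qed.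

Lemma toO_ofO u : toO (ofO u) = u. Proof. by case: u => [[? ? ? ?] [? ? ? ?]]. Qed.
Lemma ofO_toO u : ofO (toO u) = u. Proof. by case: u => [[? ? ? ?] [? ? ? ?]]. Qed.
Lemma toO_mul a b : toO (gomul opsF a b) = omul lam mu nu (toO a) (toO b).
Proof. by case: a b => [[? ? ? ?] [? ? ? ?]] [[? ? ? ?] [? ? ? ?]]. Qed.
Lemma toO_add a b : toO (goadd opsF a b) = oadd (toO a) (toO b).
Proof. by case: a b => [[? ? ? ?] [? ? ? ?]] [[? ? ? ?] [? ? ? ?]]. Qed.
Lemma toO_scale c a : toO (goscale opsF c a) = oscale c (toO a).
Proof. by case: a => [[? ? ? ?] [? ? ? ?]]. Qed.
Lemma toO_conj a : toO (goconj opsF a) = oconj (toO a).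
Proof. by case: a => [[? ? ? ?] [? ? ? ?]]. Qed.

Lemma oconjK (u : oct F) : oconj (oconj u) = u.
Proof. by case: u => [[? ? ? ?] [? ? ? ?]]; rewrite /oconj /qconj /qopp /= !opprK. Qed.

Lemma ord3_cases (i : 'I_3) : [\/ i = i0, i = i1 | i = i2].
Proof.
case: i => [[|[|[|k]]] hk] //.
- by constructor 1; apply: val_inj; rewrite /= val_i0.
- by constructor 2; apply: val_inj; rewrite /= val_i1.
- by constructor 3; apply: val_inj; rewrite /= val_i2.
Qed.

Lemma gosub_eq0 a b : gosub opsF a b = zO lam mu nu -> a = b.
Proof.
case: a b => [[? ? ? ?] [? ? ? ?]] [[? ? ? ?] [? ? ? ?]].
rewrite /gosub /goadd /goopp /gqadd /gqopp /zO /gdg /=.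
by case=> /subr0_eq -> /subr0_eq -> /subr0_eq -> /subr0_eq -> /subr0_eq -> /subr0_eq -> /subr0_eq -> /subr0_eq ->.
Qed.

Lemma gment_P x y i j : (i < 3)%N -> (j < 3)%N ->
  gment opsF (gP opsF x y) i j = goscale opsF (oH opsF) (gQe opsF x y i j).
Proof. move=> hi hj; apply: gosub_eq0; exact: (M_l lam mu nu x y (zH F) 0 hi hj). Qed.

Lemma jmul_mkH x y : jmul lam mu nu (mkH x) (mkH y) = mkH (gP opsF x y).
Proof.
by apply/matrixP => i j; rewrite !mxE val_i0 val_i1 val_i2 gment_P ?ltn_ord.
Qed.

Lemma dg_conj (a : F) : oconj (toO (gdg opsF a)) = toO (gdg opsF a).
Proof. by rewrite /oconj /toO /gdg /qconj /qopp /= !oppr0. Qed.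

Lemma mkH_herm x : Defs.hermitian (mkH x).
Proof.
move=> i j; rewrite !mxE.
case: (ord3_cases i) => ->; case: (ord3_cases j) => ->; rewrite ?val_i0 ?val_i1 ?val_i2 /=;
  by rewrite ?toO_conj ?oconjK ?dg_conj.
Qed.

Lemma hc_mkH x : hc (mkH x) = x.
Proof.
rewrite /hc !mxE val_i0 val_i1 val_i2 /= !ofO_toO.
by case: x => ? ? ? [[? ? ? ?] [? ? ? ?]] [[? ? ? ?] [? ? ? ?]] [[? ? ? ?] [? ? ? ?]].
Qed.

Lemma xnx (z : F) : z = - z -> z = 0.
Proof.
move/eqP; rewrite -subr_eq0 opprK -mulr2n -mulr_natr mulf_eq0 (negbTE h2) orbF.
by move/eqP.
Qed.

Lemma herm_diag (u : oct F) : u = oconj u -> toO (gdg opsF (q0 (ofst u))) = u.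
Proof.
case: u => [[a b c d] [e f g h]]; rewrite /oconj /qconj /qopp /=.
case=> /xnx -> /xnx -> /xnx -> /xnx -> /xnx -> /xnx -> /xnx ->.
by [].
Qed.

Lemma herm_hc X : Defs.hermitian X -> mkH (hc X) = X.
Proof.
move=> hX; apply/matrixP => i j; rewrite mxE.
case: (ord3_cases i) => ->; case: (ord3_cases j) => ->; rewrite ?val_i0 ?val_i1 ?val_i2 /=;
  first [ by rewrite herm_diag | by rewrite toO_ofO | by rewrite toO_conj toO_ofO [RHS]hX ].
Qed.

Lemma hc_lin c X Y : hc (madd (mscale c X) Y) = ghadd opsF (ghscale opsF c (hc X)) (hc Y).
Proof. by rewrite /hc !mxE. Qed.
Lemma hc_sub X Y : hc (msub X Y) = ghsub opsF (hc X) (hc Y).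
Proof. by rewrite /hc !mxE. Qed.
Lemma hc_scale c X : hc (mscale c X) = ghscale opsF c (hc X).
Proof. by rewrite /hc !mxE. Qed.
Lemma hc_mone : hc (Defs.mone F) = gone opsF.
Proof.
have e12 : (i1 == i2) = false by rewrite -val_eqE /= val_i1 val_i2.
have e20 : (i2 == i0) = false by rewrite -val_eqE /= val_i0 val_i2.
have e01 : (i0 == i1) = false by rewrite -val_eqE /= val_i0 val_i1.
by rewrite /hc !mxE !eqxx e12 e20 e01.
Qed.

Definition vec (X : mat3 F) := toRow (hc X).
Definition mat (r : 'rV[F]_27) := mkH (fromRow r).

Lemma vec_mat r : vec (mat r) = r. Proof. by rewrite /vec /mat hc_mkH toRowK. Qed.
Lemma mat_vec X : Defs.hermitian X -> mat (vec X) = X.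
Proof. by move=> hX; rewrite /vec /mat fromRowK herm_hc. Qed.
Lemma herm_mat r : Defs.hermitian (mat r). Proof. exact: mkH_herm. Qed.
Lemma vec_inj X Y : Defs.hermitian X -> Defs.hermitian Y -> vec X = vec Y -> X = Y.
Proof. by move=> hX hY e; rewrite -(mat_vec hX) -(mat_vec hY) e. Qed.
Lemma vec_jmul X Y : Defs.hermitian X -> Defs.hermitian Y -> vec (jmul lam mu nu X Y) = p lam mu nu (vec X) (vec Y).
Proof.
move=> hX hY; rewrite -{1}(mat_vec hX) -{1}(mat_vec hY) /mat jmul_mkH /vec hc_mkH.
by rewrite /p.
Qed.
Lemma herm_jmul X Y : Defs.hermitian X -> Defs.hermitian Y -> Defs.hermitian (jmul lam mu nu X Y).
Proof. by move=> hX hY; rewrite -(mat_vec hX) -(mat_vec hY) /mat jmul_mkH; apply: mkH_herm. Qed.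
Lemma vec_lin c X Y : vec (madd (mscale c X) Y) = c *: vec X + vec Y.
Proof. by rewrite /vec hc_lin toRow_lin. Qed.
Lemma toRow_scale c a : toRow (ghscale opsF c a) = c *: toRow a.
Proof.
have fs u : fromRow (c *: u) = ghscale opsF c (fromRow u) by rewrite /fromRow /hofl !mxE.
by apply: fromRow_inj; rewrite fs !fromRowK.
Qed.
Lemma toRow_sub a b : toRow (ghsub opsF a b) = toRow a - toRow b.
Proof. by rewrite /ghsub toRow_add toRow_opp. Qed.
Lemma vec_sub X Y : vec (msub X Y) = vec X - vec Y.
Proof. by rewrite /vec hc_sub toRow_sub. Qed.
Lemma vec_scale c X : vec (mscale c X) = c *: vec X.
Proof. by rewrite /vec hc_scale toRow_scale. Qed.
Lemma vec_mone : vec (Defs.mone F) = onev lam mu nu.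
Proof. by rewrite /vec hc_mone. Qed.

Lemma oconj_sub (a b : oct F) : oconj (osub a b) = osub (oconj a) (oconj b).
Proof.
by case: a => [[? ? ? ?] [? ? ? ?]]; case: b => [[? ? ? ?] [? ? ? ?]];
  rewrite /osub /oadd /oopp /oconj /qconj /qopp /qadd /= !opprD.
Qed.
Lemma oconj_scale c (a : oct F) : oconj (oscale c a) = oscale c (oconj a).
Proof.
by case: a => [[? ? ? ?] [? ? ? ?]]; rewrite /oscale /oconj /qconj /qopp /qscale /= !mulrN.
Qed.
Lemma herm_msub (X Y : mat3 F) : Defs.hermitian X -> Defs.hermitian Y -> Defs.hermitian (msub X Y).
Proof. by move=> hX hY i j; rewrite !mxE oconj_sub -hX -hY. Qed.
Lemma herm_mscale c (X : mat3 F) : Defs.hermitian X -> Defs.hermitian (mscale c X).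
Proof. by move=> hX i j; rewrite !mxE oconj_scale -hX. Qed.
Lemma herm_Uop (S X : mat3 F) : Defs.hermitian S -> Defs.hermitian X -> Defs.hermitian (Uop lam mu nu S X).
Proof.
move=> hS hX; apply: herm_msub => //; apply: herm_mscale.
by apply: herm_jmul => //; apply: herm_jmul.
Qed.
Lemma vec_Uop (S X : mat3 F) : Defs.hermitian S -> Defs.hermitian X ->
  vec (Uop lam mu nu S X) = U (p lam mu nu) (vec S) (vec X).
Proof.
move=> hS hX; rewrite /Uop vec_sub vec_scale !vec_jmul //; last exact: herm_jmul.
by rewrite U_def scaler_nat mulr2n.
Qed.
Lemma vec_sym (S : mat3 F) : Defs.symmetry lam mu nu S -> p lam mu nu (vec S) (vec S) = onev lam mu nu.
Proof. by case=> hS e; rewrite -vec_jmul // e vec_mone. Qed.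
End Mat.

End S6.
Import S6.

Module S7.
Import GRing.Theory.
Local Open Scope ring_scope.

Section Main.
Variable F : fieldType.
Variables lam mu nu : F.
Hypotheses (hl : lam != 0) (hm : mu != 0) (hn : nu != 0) (h2 : (2%:R : F) != 0).
Variable D : mat3 F -> mat3 F.
Hypothesis H2 : two_local_1_automorphism lam mu nu D.

Local Notation pp := (p lam mu nu).
Local Notation B := (Bm lam mu nu).
Local Notation V := 'rV[F]_27.
Local Notation vec := (@S6.vec F).
Local Notation mat := (mat lam mu nu).
Local Notation g := (gr lam mu nu).

Let pC := S5.pC lam mu nu.
Let pL := S5.pL lam mu nu.
Let p1 := S5.p1 lam mu nu h2.
Let JF := S5.JFr lam mu nu.
Let JG := S5.JGr lam mu nu.
Let trL := S5.trL lam mu nu.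
Let trA := S5.trA lam mu nu.

Definition Dv (r : V) : V := vec (D (mat r)).

Lemma loc a b : exists s, [/\ pp s s = onev lam mu nu, Dv a = U pp s a & Dv b = U pp s b].
Proof.
have [S [hS [ea eb]]] := H2 (herm_mat lam mu nu a) (herm_mat lam mu nu b).
exists (vec S); split; first exact: (vec_sym h2).
- by rewrite /Dv ea (vec_Uop lam mu nu h2) ?vec_mat //; [case: hS | exact: herm_mat].
- by rewrite /Dv eb (vec_Uop lam mu nu h2) ?vec_mat //; [case: hS | exact: herm_mat].
Qed.

Lemma iso a b : B (Dv a) (Dv b) = B a b.
Proof.
have [s [hs -> ->]] := loc a b.
by rewrite -!tr_Bm (tr_iso h2 pC pL p1 JF JG trL trA hs).
Qed.

Lemma sq a : Dv (pp a a) = pp (Dv a) (Dv a).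
Proof.
have [s [hs -> ->]] := loc a (pp a a).
by rewrite (U_mul h2 pC pL p1 JF JG hs).
Qed.

Local Notation G := (diag_mx g).
Definition M : 'M[F]_27 := \matrix_(i, j) (Dv (delta_mx 0 i)) 0 j.

Lemma g_neq0 k : g 0 k != 0.
Proof. by rewrite mxE; apply: (gram_neq0 h2 hl hm hn); exact: ltn_ord. Qed.

Lemma Bm_delta_r u i : B u (delta_mx 0 i) = u 0 i * g 0 i.
Proof.
rewrite Bm_sum (bigD1 i) //= big1 ?addr0 => [|k /negbTE nk]; rewrite !mxE ?eqxx ?nk /= ?mulr1 ?mulr0 //.
Qed.
Lemma Bm_linl c u v w : B (c *: u + v) w = c * B u w + B v w.
Proof.
rewrite !Bm_sum mulr_sumr -big_split; apply: eq_bigr => k _; rewrite !mxE /=; ring.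
Qed.
Lemma Bm_subl u v w : B (u - v) w = B u w - B v w.
Proof.
rewrite !Bm_sum -sumrB; apply: eq_bigr => k _; rewrite !mxE; ring.
Qed.
Lemma BM w i : B w (Dv (delta_mx 0 i)) = (w *m G *m M^T) 0 i.
Proof.
rewrite Bm_sum mul_mx_diag !mxE; apply: eq_bigr => k _; rewrite !mxE.
by [].
Qed.
Lemma GramM : M *m G *m M^T = G.
Proof.
apply/matrixP => i j.
have -> : (M *m G *m M^T) i j = B (Dv (delta_mx 0 i)) (Dv (delta_mx 0 j)).
  rewrite Bm_sum mul_mx_diag !mxE; apply: eq_bigr => k _; rewrite !mxE.
  by [].
rewrite iso Bm_delta_r !mxE eqxx /=.
case: (eqVneq i j) => [->|ne]; first by rewrite ?eqxx mul1r mulr1n.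
by rewrite mul0r mulr0n.
Qed.
Lemma detG : \det G != 0.
Proof. by rewrite det_diag; apply/prodf_neq0 => k _; exact: g_neq0. Qed.
Lemma unitM : M \in unitmx.
Proof.
rewrite unitmxE unitfE; apply/eqP => hM.
have := congr1 determinant GramM; rewrite !det_mulmx det_tr hM !mul0r => /esym /eqP.
by rewrite (negbTE detG).
Qed.
Lemma unitG : G \in unitmx.
Proof. by rewrite unitmxE unitfE detG. Qed.

Lemma nondeg w : (forall i, B w (Dv (delta_mx 0 i)) = 0) -> w = 0.
Proof.
move=> H.
have e : w *m G *m M^T = 0 by apply/rowP => i; rewrite -BM H mxE.
have e2 : w *m G = 0.
  have uMt : M^T \in unitmx by rewrite unitmx_tr unitM.
  by rewrite -(mulmxK uMt (w *m G)) e mul0mx.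
apply/rowP => k; have := congr1 (fun m : 'M[F]_(1,27) => m 0 k) e2; rewrite mul_mx_diag !mxE => /eqP.
by have gk := g_neq0 k; rewrite mxE in gk; rewrite mulf_eq0 (negbTE gk) orbF => /eqP.
Qed.

Lemma nondeg0 w : (forall i, B w (delta_mx 0 i) = 0) -> w = 0.
Proof.
move=> H; apply/rowP => k; rewrite [RHS]mxE; have := H k; rewrite Bm_delta_r mxE => /eqP.
by have gk := g_neq0 k; rewrite mxE in gk; rewrite mulf_eq0 (negbTE gk) orbF => /eqP.
Qed.

Lemma Dv_lin c a b : Dv (c *: a + b) = c *: Dv a + Dv b.
Proof.
apply/eqP; rewrite -subr_eq0; apply/eqP; apply: nondeg => i.
by rewrite Bm_subl Bm_linl !iso Bm_linl subrr.
Qed.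
Lemma Dv_add a b : Dv (a + b) = Dv a + Dv b.
Proof. by have := Dv_lin 1 a b; rewrite !scale1r. Qed.

Lemma Dv_mul a b : Dv (pp a b) = pp (Dv a) (Dv b).
Proof.
exact: (polar h2 pC pL Dv_add sq).
Qed.

Lemma Dv_inj a b : Dv a = Dv b -> a = b.
Proof.
move=> e; apply/eqP; rewrite -subr_eq0; apply/eqP; apply: nondeg0 => i.
by rewrite Bm_subl -(iso a) -(iso b) e subrr.
Qed.

Lemma Dv_surj y : exists r, Dv r = y.
Proof.
set c := y *m G *m M^T *m invmx G.
exists c; apply/eqP; rewrite -subr_eq0; apply/eqP; apply: nondeg => i.
have e : (c *m G) 0 i = c 0 i * g 0 i by rewrite mul_mx_diag mxE.
by rewrite Bm_subl iso Bm_delta_r BM -e /c (mulmxKV unitG) subrr.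
Qed.
End Main.

End S7.
Import S7.

Module S8.
Import GRing.Theory.
Local Open Scope ring_scope.

Lemma oconj_add (F : fieldType) (a b : oct F) : oconj (oadd a b) = oadd (oconj a) (oconj b).
Proof.
by case: a => [[? ? ? ?] [? ? ? ?]]; case: b => [[? ? ? ?] [? ? ? ?]];
  rewrite /oadd /oconj /qconj /qopp /qadd /= !opprD.
Qed.
Lemma herm_madd (F : fieldType) (X Y : mat3 F) :
  Defs.hermitian X -> Defs.hermitian Y -> Defs.hermitian (madd X Y).
Proof. by move=> hX hY i j; rewrite !mxE oconj_add -hX -hY. Qed.

Theorem main_gen (F : fieldType) (lam mu nu : F)
  (hl : lam != 0) (hm : mu != 0) (hn : nu != 0) (h2 : (2%:R : F) != 0)
  (D : mat3 F -> mat3 F) :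
  two_local_1_automorphism lam mu nu D -> jordan_automorphism lam mu nu D.
Proof.
move=> H2.
have hD x : Defs.hermitian x -> Defs.hermitian (D x).
  move=> hx; have [S [hS [e _]]] := H2 x x hx hx; rewrite e.
  by apply: (herm_Uop lam mu nu h2) => //; case: hS.
have vD x : Defs.hermitian x -> S6.vec (D x) = Dv lam mu nu D (S6.vec x).
  by move=> hx; rewrite /Dv (mat_vec lam mu nu h2 hx).
have hL c (x y : mat3 F) : Defs.hermitian x -> Defs.hermitian y -> Defs.hermitian (madd (mscale c x) y).
  by move=> hx hy; apply: herm_madd => //; apply: herm_mscale.
split.
- exact: hD.
- move=> c x y hx hy; apply: (vec_inj lam mu nu h2); [apply: hD; exact: hL | apply: hL; exact: hD|].
  rewrite vD; last exact: hL.
  by rewrite (vec_lin lam mu nu) (Dv_lin hl hm hn h2 H2) -!vD // (vec_lin lam mu nu).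
- move=> x y hx hy; apply: (vec_inj lam mu nu h2).
  + by apply: hD; apply: (herm_jmul lam mu nu h2).
  + by apply: (herm_jmul lam mu nu h2); apply: hD.
  rewrite vD; last exact: (herm_jmul lam mu nu h2).
  rewrite (vec_jmul lam mu nu h2) // (Dv_mul hl hm hn h2 H2) -!vD //.
  by rewrite (vec_jmul lam mu nu h2) //; apply: hD.
- move=> x y hx hy e; apply: (vec_inj lam mu nu h2) => //.
  by apply: (Dv_inj hl hm hn h2 H2); rewrite -!vD // e.
- move=> y hy; have [r hr] := Dv_surj hl hm hn h2 H2 (S6.vec y).
  exists (mat lam mu nu r); first exact: herm_mat.
  apply: (vec_inj lam mu nu h2) => //; first by apply: hD; exact: herm_mat.
Qed.


End S8.
Import S8.

Unset Implicit Arguments.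

Theorem theorem4p8 (F : closedFieldType) (lam mu nu : F)
  (hlam : lam != 0) (hmu : mu != 0) (hnu : nu != 0)
  (hchar : (2%:R : F) != 0)
  (D : mat3 F -> mat3 F) :
  two_local_1_automorphism lam mu nu D -> jordan_automorphism lam mu nu D.
Proof. exact: main_gen. Qed.
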